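(* Let $q$ be a power of a prime $p$, let $n \in \mathbb{N}$, and let $S \subseteq \{0,1,\ldots,n\}$, $S \neq \emptyset$. If $q = 2$, further assume $0 \notin S$ and $n \notin S$. Then for all $i \in \mathbb{Z}_{q^n-1}$, $\delta_{n-S}(i) = \delta_S(Q_n - i)$, where $Q_n = (q^n-1)/(q-1)$. Hence $\delta_{n-S}$ is a shift of the reversal of $\delta_S$.
   Context: Define $\Omega(0) = \{0\} \subseteq \mathbb{Z}_{q^n-1}$ and, for $1 \le w \le n$, $\Omega(w)$ is the set of $k \in \mathbb{Z}_{q^n-1}$ whose canonical representative in $\{0,1,\ldots,q^n-2\}$ equals $q^{i_1} + \cdots + q^{i_w}$ for some integers $0 \le i_1 < \cdots < i_w \le n-1$. For $W \subseteq \{0,\ldots,n\}$, $\Omega(W) = \bigcup_{w \in W}\Omega(w)$ and $\delta_W : \mathbb{Z}_{q^n-1} \to \{0,1\} \subseteq \mathbb{F}_p$ is the indicator function of $\Omega(W)$. Also $n - S := \{n - s : s \in S\}$. For $f : \mathbb{Z}_N \to \mathbb{F}_q$, the $k$-shift of $f$ is $i \mapsto f(i+k)$ and the reversal of $f$ is $i \mapsto f(-(1+i))$. *)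

(* Defs.v *)
From HB Require Import structures.
From mathcomp Require Import all_boot all_order all_algebra.
Unset Printing Implicit Defensive.
Import Order.TTheory GRing.Theory Num.Theory.
Local Open Scope ring_scope.

(* Elements of Z_{q^n-1} are represented by integers k : int; the canonical
   representative is (k %% (q^n-1))%Z (in {0,...,q^n-2} when q^n-1 > 0;
   when q^n-1 = 0, i.e. n = 0, Z_0 = Z and the representative is k itself). *)
Definition modulus (q n : nat) : int := (q ^ n)%:Z - 1.

Definition canrep (q n : nat) (k : int) : int := (k %% modulus q n)%Z.

(* k \in Omega(w): canonical rep equals q^{i_1}+...+q^{i_w}, 0<=i_1<...<i_w<=n-1.
   For w = 0 this gives the empty sum, i.e. Omega(0) = {0}. *)
Definition in_Omega (q n w : nat) (k : int) : bool :=
  [exists A : {set 'I_n}, (#|A| == w) && (canrep q n k == (\sum_(i in A) q ^ i)%N%:Z)].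

Definition in_OmegaW (q n : nat) (W : {set 'I_n.+1}) (k : int) : bool :=
  [exists w in W, in_Omega q n w k].

Definition delta (p q n : nat) (W : {set 'I_n.+1}) (k : int) : 'F_p :=
  if in_OmegaW q n W k then 1 else 0.

Definition nminus (n : nat) (S : {set 'I_n.+1}) : {set 'I_n.+1} :=
  [set rev_ord s | s in S].

Definition Qn (q n : nat) : int := ((q ^ n - 1) %/ (q - 1))%N%:Z.

Definition shift (T : Type) (f : int -> T) (k : int) : int -> T := fun i => f (i + k).
Definition reversal (T : Type) (f : int -> T) : int -> T := fun i => f (- (1 + i)).
Arguments nminus {n} S.
Arguments shift {T} f k _.
Arguments reversal {T} f _.

(* Main.v *)
Require Import Defs.
From HB Require Import structures.
From mathcomp Require Import all_boot all_order all_algebra.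
From mathcomp Require Import zify ring.
Import Order.TTheory GRing.Theory Num.Theory.
Local Open Scope ring_scope.

Lemma geom_sum (q n : nat) : (0 < q)%N ->
  ((q - 1) * (\sum_(i < n) q ^ i) = q ^ n - 1)%N.
Proof.
move=> q0; elim: n => [|n IH]; first by rewrite big_ord0 muln0 expn0.
rewrite big_ord_recr /= mulnDr IH expnS.
have : (0 < q ^ n)%N by rewrite expn_gt0 q0.
set X := (q ^ n)%N; nia.
Qed.

Lemma Qn_sum (q n : nat) : (1 < q)%N -> Qn q n = (\sum_(i < n) q ^ i)%N%:Z.
Proof.
move=> q1; rewrite /Qn -geom_sum ?mulKn //; lia.
Qed.

Lemma sum_split (q n : nat) (A : {set 'I_n}) :
  (\sum_(i in A) q ^ i + \sum_(i in ~: A) q ^ i = \sum_(i < n) q ^ i)%N.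
Proof.
rewrite [RHS](bigID (mem A)) /=.
congr (_ + _); apply: eq_bigl => i; by rewrite ?in_setC.
Qed.

Lemma key (q n : nat) (A : {set 'I_n}) (x : int) : (1 < q)%N ->
  canrep q n x = (\sum_(i in A) q ^ i)%N%:Z ->
  ((\sum_(i in ~: A) q ^ i)%N%:Z < modulus q n \/ n = 0%N) ->
  canrep q n (Qn q n - x) = (\sum_(i in ~: A) q ^ i)%N%:Z.
Proof.
move=> q1 hx hb.
case: hb => [hb|n0].
  rewrite /canrep.
  have -> : Qn q n - x = (- (x %/ modulus q n)%Z) * modulus q n + (Qn q n - canrep q n x).
    rewrite /canrep {1}(divz_eq x (modulus q n)); ring.
  rewrite modzMDl hx Qn_sum // -(@sum_split q n A) PoszD addrAC subrr add0r.
  apply: modz_small; rewrite hb andbT //.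
subst n.
have e : forall B : {set 'I_0}, (\sum_(i in B) q ^ i = 0)%N.
  by move=> B; apply: big1 => -[].
rewrite e; move: hx; rewrite e /canrep /modulus /Qn expn0 subrr !modz0 subnn div0n.
by move=> ->; rewrite subrr.
Qed.

Lemma mem_nminus (n : nat) (S : {set 'I_n.+1}) x :
  (x \in nminus S) = (rev_ord x \in S).
Proof.
by rewrite /nminus -{1}(rev_ordK x) mem_imset //; apply: rev_ord_inj.
Qed.

Lemma nminusK (n : nat) (S : {set 'I_n.+1}) : nminus (nminus S) = S.
Proof. by apply/setP => x; rewrite !mem_nminus rev_ordK. Qed.

Lemma dir (q n : nat) (W : {set 'I_n.+1}) (x : int) : (1 < q)%N ->
  (q = 2%N -> ord0 \notin W) ->
  in_OmegaW q n W x -> in_OmegaW q n (nminus W) (Qn q n - x).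
Proof.
move=> q1 hq /existsP[w /andP[wW /existsP[A /andP[/eqP cA /eqP hx]]]].
apply/existsP; exists (rev_ord w); rewrite mem_nminus rev_ordK wW /=.
apply/existsP; exists (~: A); apply/andP; split.
  apply/eqP; rewrite /=; move: (cardsC A) (card_ord n); set c := #|~: A|; set d := #|'I_n|; rewrite cA; lia.
apply/eqP. refine (@key q n A x q1 hx _).
have hw : q = 2%N -> w != ord0 by move=> /hq; apply: contraNneq => <-.
clear hq wW; case: n W A w cA hx hw => [|n] W A w cA hx hw; [by right|left].
have hS := @sum_split q n.+1 A.
have hQ := @geom_sum q n.+1 (ltnW q1).
rewrite /modulus.
case: (ltnP 2 q) => q2.
  have hs : (0 < \sum_(i < n.+1) q ^ i)%N by rewrite big_ord_recl expn0.
  have : (1 <= q ^ n.+1)%N by rewrite expn_gt0 ltnW.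
  move: hS hQ hs; set T := (\sum_(i < n.+1) q ^ i)%N;
    set U := (\sum_(i in ~: A) q ^ i)%N; set V := (\sum_(i in A) q ^ i)%N;
    set X := (q ^ n.+1)%N => hS hQ hs hX.
  rewrite -(subnK hX) PoszD addrK ltz_nat; nia.
have q2' : q = 2%N by lia.
have w0 := hw q2'.
have hV : (0 < \sum_(i in A) q ^ i)%N.
  have : (0 < #|A|)%N by rewrite cA lt0n; apply: contra w0 => /eqP w0; apply/eqP/val_inj.
  case/card_gt0P => a aA; rewrite (bigD1 a) //= ltn_addr // expn_gt0 ltnW //.
have : (1 <= q ^ n.+1)%N by rewrite expn_gt0 ltnW.
move: hS hQ hV; set T := (\sum_(i < n.+1) q ^ i)%N;
  set U := (\sum_(i in ~: A) q ^ i)%N; set V := (\sum_(i in A) q ^ i)%N;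
  set X := (q ^ n.+1)%N => hS hQ hV hX.
rewrite -(subnK hX) PoszD addrK ltz_nat; subst q; nia.
Qed.

Theorem lemma4p1 (p k q n : nat) (S : {set 'I_n.+1}) :
  prime p -> (0 < k)%N -> q = (p ^ k)%N ->
  S != set0 ->
  (q = 2%N -> (ord0 \notin S) /\ (ord_max \notin S)) ->
  (forall i : int, delta p q n (nminus S) i = delta p q n S (Qn q n - i)) /\
  (exists s : int, forall i : int,
      delta p q n (nminus S) i = shift (reversal (delta p q n S)) s i).
Proof.
move=> pp k0 hq _ h2.
have q1 : (1 < q)%N.
  have p1 := prime_gt1 pp.
  rewrite hq -(prednK k0) expnS.
  have : (0 < p ^ k.-1)%N by rewrite expn_gt0 ltnW.
  set X := (p ^ k.-1)%N; nia.
have hS : q = 2%N -> ord0 \notin S by move=> /h2 [].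
have hS' : q = 2%N -> ord0 \notin nminus S.
  move=> /h2 [_ h]; rewrite mem_nminus.
  have -> : rev_ord (@ord0 n) = ord_max by apply: val_inj => /=; lia.
  by [].
have main : forall i, delta p q n (nminus S) i = delta p q n S (Qn q n - i).
  move=> i; rewrite /delta.
  suff -> : in_OmegaW q n (nminus S) i = in_OmegaW q n S (Qn q n - i) by [].
  apply/idP/idP => h.
    by rewrite -[S]nminusK; apply: dir.
  by have := @dir q n S _ q1 hS h; rewrite opprB addrC subrK.
split => //.
exists (- 1 - Qn q n) => i.
rewrite main /shift /reversal; congr (delta _ _ _ _ _); ring.
Qed.
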